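(* Let $\mathbf{k}$ be an algebraically closed field of characteristic zero, $\mathcal{A}=\mathbf{k}[x_1,\ldots,x_n]$, and let $\mathcal{L}_+$ be the Lie algebra of polynomial vector fields on $\mathbb{A}^n$ vanishing at the origin. Let $U$ be a finite-dimensional $\mathbf{k}$-vector space and let $\rho$ be an $\mathcal{A}$-linear representation of $\mathcal{L}_+$ on $\mathcal{A}\otimes_{\mathbf{k}}U$. Then for each $i\in\{1,\ldots,n\}$ there are only finitely many $k\in\mathbb{Z}^n_{\geq0}\setminus\{0\}$ for which $\rho\left(x^k\frac{\partial}{\partial x_i}\right)\neq 0$.
   Context: $\mathcal{L}_+$ is spanned by $x^k\frac{\partial}{\partial x_i}$ with $k\in\mathbb{Z}^n_{\ge0}\setminus\{0\}$, where $x^k=x_1^{k_1}\cdots x_n^{k_n}$. An $\mathcal{A}$-linear representation of $\mathcal{L}_+$ on $\mathcal{A}\otimes U$ is a Lie algebra homomorphism $\rho:\mathcal{L}_+\to\mathrm{End}_{\mathcal{A}}(\mathcal{A}\otimes U)$. *)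

(* Defs.v *)
From HB Require Import structures.
From mathcomp Require Import all_boot all_order all_algebra.
From mathcomp Require Import mpoly.
Set Implicit Arguments. Unset Strict Implicit. Unset Printing Implicit Defensive.
Import GRing.Theory.
Local Open Scope ring_scope.

(* Polynomial vector fields on A^n over k: X = sum_i X_i d/dx_i, encoded as
   the row vector (X_0, ..., X_{n-1}) of coefficients in A = k[x_1..x_n]. *)
Definition vfield (k : fieldType) (n : nat) := 'rV[{mpoly k[n]}]_n.

Definition vf_bracket (k : fieldType) (n : nat) (X Y : vfield k n) : vfield k n :=
  \row_(j < n) \sum_(i < n)
     (X 0 i * (Y 0 j)^`M(i) - Y 0 i * (X 0 j)^`M(i)).

Definition in_Lplus (k : fieldType) (n : nat) (X : vfield k n) : Prop :=
  forall i : 'I_n, (X 0 i)@_(0%MM) = 0.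

Definition xd (k : fieldType) (n : nat) (m : 'X_{1..n}) (i : 'I_n) : vfield k n :=
  \row_(j < n) (if j == i then 'X_[m] else 0).

(* An A-linear representation of L_+ on A (x) U, with dim U = d, identifying
   End_A(A (x) U) with d x d matrices over A (via a k-basis of U): a k-linear
   map on L_+ sending brackets to commutators. *)
Definition Alin_rep (k : fieldType) (n d : nat)
    (rho : vfield k n -> 'M[{mpoly k[n]}]_d) : Prop :=
  (forall (a : k) (X Y : vfield k n), in_Lplus X -> in_Lplus Y ->
      rho (a%:MP *: X + Y) = a%:MP *: rho X + rho Y) /\
  (forall X Y : vfield k n, in_Lplus X -> in_Lplus Y ->
      rho (vf_bracket X Y) = rho X *m rho Y - rho Y *m rho X).

(* Main.v *)
Require Import Defs.
From HB Require Import structures.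
From mathcomp Require Import all_boot all_order all_algebra.
From mathcomp Require Import mpoly.
From Stdlib Require Import Classical.
Set Implicit Arguments. Unset Strict Implicit. Unset Printing Implicit Defensive.
Import GRing.Theory.
Local Open Scope ring_scope.

Definition euler (k : fieldType) (n : nat) : vfield k n := \row_(j < n) 'X_j.

Lemma euler_term (k : fieldType) (n : nat) (m : 'X_{1..n}) (l : 'I_n) :
  ('X_l : {mpoly k[n]}) * ('X_[m])^`M(l) = 'X_[m] *+ m l.
Proof.
rewrite mderivX -scalerAr -mpolyXD scaler_nat.
have [->|nz] := eqVneq (m l) 0%N; first by rewrite !mulr0n.
by rewrite addmC submK // lep1mP.
Qed.

Lemma dX (k : fieldType) (n : nat) (i j : 'I_n) :
  ('X_j : {mpoly k[n]})^`M(i) = (j == i)%:R.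
Proof.
rewrite mderivX mnm1E; case: eqP => [->|_]; last by rewrite scale0r.
have -> : (U_(i) - U_(i))%MM = 0%MM by apply/mnmP=> l; rewrite mnmBE subnn mnm0E.
by rewrite mpolyX0 scale1r.
Qed.

Lemma brE (k : fieldType) (n : nat) (m : 'X_{1..n}) (i : 'I_n) :
  vf_bracket (euler k n) (xd k m i) = ((mdeg m)%:R - 1 : k)%:MP *: xd k m i.
Proof.
apply/matrixP => a j; rewrite !mxE.
under eq_bigr => l _ do rewrite !mxE.
rewrite sumrB [X in _ - X](bigD1 i) //= [X in _ - (_ + X)]big1; last first.
  move=> l ne; rewrite (negbTE ne); by rewrite mul0r.
rewrite eqxx addr0 dX.
have [e|ne] := eqVneq j i; last first.
  rewrite mulr0 subr0 mulr0 big1 // => l _.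
  by rewrite mderiv0 mulr0.
subst j; rewrite mulr1.
under eq_bigr => l _ do rewrite euler_term.
rewrite sumrMnr -mdegE rmorphB /= mpolyC_nat mpolyC1 mulrBl mul1r mulr_natl.
by [].
Qed.
Lemma horner_char_poly_det (R : comNzRingType) n (A : 'M[R]_n) a :
  (char_poly A).[a] = \det (a%:M - A).
Proof.
symmetry; rewrite horner_sum; apply: eq_bigr => s _.
rewrite hornerM horner_exp !hornerE; congr (_ * _).
rewrite (big_morph _ (fun p q => hornerM p q a) (hornerC 1 a)).
by apply: eq_bigr => i _; rewrite !mxE !(hornerE, hornerMn).
Qed.

Lemma fin_nat (P : pred nat) N :
  (forall s, uniq s -> all P s -> (size s <= N)%N) ->
  exists B, forall j, P j -> (j <= B)%N.
Proof.
elim: N P => [|N IH] P H.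
  exists 0%N => j Pj; have := H [:: j]; rewrite /= Pj => /(_ isT isT) //.
case: (classic (exists j, P j)) => [[j0 Pj0]|nex]; last first.
  by exists 0%N => j Pj; case: nex; exists j.
have [|B HB] := IH (fun j => P j && (j != j0)).
  move=> s us aP; have := H (j0 :: s); rewrite /= ltnS; apply.
    rewrite us andbT; apply/negP => /(allP aP) /=; by rewrite eqxx andbF.
  rewrite Pj0 /=; apply/allP => x /(allP aP) /andP[] //.
exists (maxn B j0) => j Pj; have [->|ne] := eqVneq j j0; first exact: leq_maxr.
by rewrite leq_max HB ?Pj ?ne.
Qed.

Theorem lemma5p2 (k : closedFieldType) (pchar0 : [pchar k] =i pred0)
    (n d : nat) (rho : vfield k n -> 'M[{mpoly k[n]}]_d) :
  Alin_rep rho ->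
  forall i : 'I_n, exists s : seq 'X_{1..n},
    forall m : 'X_{1..n}, m != 0%MM -> rho (@xd k n m i) != 0 -> m \in s.
Proof.
move=> [lin br] i.
have L0 : in_Lplus (0 : vfield k n) by move=> j; rewrite mxE mcoeff0.
have rho0 : rho 0 = 0.
  have := lin 1 0 0 L0 L0; rewrite mpolyC1 !scale1r addr0 => e.
  by apply: (addrI (rho 0)); rewrite addr0 -e.
have rhoZ a X : in_Lplus X -> rho (a%:MP *: X) = a%:MP *: rho X.
  by move=> LX; have := lin a X 0 LX L0; rewrite !addr0 rho0 addr0.
have LE : in_Lplus (euler k n).
  by move=> j; rewrite mxE mcoeffX mnm1_eq0.
have LX m : m != 0%MM -> in_Lplus (xd k m i).
  move=> nz j; rewrite mxE; case: (j == i); last by rewrite mcoeff0.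
  by rewrite mcoeffX (negbTE nz).
set E' := rho (euler k n).
pose L := lin_mulmx E' - lin_mulmxr E'.
pose p := char_poly L.
pose P := fun j : nat => root p ((j%:R - 1 : k)%:MP).
have key m : m != 0%MM -> rho (xd k m i) != 0 -> P (mdeg m).
  move=> nz nzM; set M := rho (xd k m i) in nzM *.
  pose a : {mpoly k[n]} := ((mdeg m)%:R - 1 : k)%:MP.
  have eq1 : E' *m M - M *m E' = a *: M.
    rewrite -br //; last exact: LX.
    have -> : vf_bracket (euler k n) (xd k m i) = a *: xd k m i by exact: brE.
    have h := rhoZ ((mdeg m)%:R - 1) (xd k m i) (LX m nz). exact h.
  set v := mxvec M.
  have eq2 : v *m (a%:M - L) = 0.
    rewrite mulmxBr mul_mx_scalar /L mulmxBr !mul_vec_lin /= -linearB /= eq1.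
    by rewrite linearZ /= subrr.
  have eq3 : \det (a%:M - L) *: v = 0.
    by rewrite -mul_mx_scalar -mul_mx_adj mulmxA eq2 mul0mx.
  move: eq3 => /eqP; rewrite scalemx_eq0 mxvec_eq0 (negbTE nzM) orbF => /eqP dz.
  by rewrite /P /root horner_char_poly_det -/a dz.
have natinj : forall a b : nat, (a%:R : k) = b%:R -> a = b.
  move=> a b e; wlog h : a b e / (a <= b)%N.
    move=> W; case: (leqP a b) => h; first exact: W.
    by symmetry; apply: W; [rewrite e | exact: ltnW].
  have : ((b - a)%:R : k) == 0 by rewrite natrB // e subrr.
  rewrite (proj1 (pcharf0P k) pchar0) subn_eq0 => h2.
  by apply/eqP; rewrite eqn_leq h h2.
have [B HB] : exists B, forall j, P j -> (j <= B)%N.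
  apply: (@fin_nat P (d * d)) => s us aP.
  have pnz : p != 0 by apply: monic_neq0; exact: char_poly_monic.
  have := max_poly_roots pnz (rs := map (fun j : nat => ((j%:R - 1 : k)%:MP)) s).
  rewrite size_map size_char_poly ltnS; apply.
    by apply/allP => x /mapP [j js ->]; exact: (allP aP).
  rewrite map_inj_uniq // => a b /eqP; rewrite mpolyC_eq => /eqP e.
  by apply: natinj; move: e => /eqP; rewrite -subr_eq0 opprB addrA subrK subr_eq0 => /eqP.
exists (map val (enum [set: 'X_{1..n < B.+1}])) => m nz nzM.
have hm : (mdeg m < B.+1)%N by rewrite ltnS HB // key.
apply/mapP; exists (BMultinom hm) => //; by rewrite mem_enum inE.
Qed.
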